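(* Consider the two optimization problems \[ \text{(P1)}\quad \min_{q\in\mathbb{R}^{n},\,\theta\in\mathbb{R}^{n}} \ \sum_{j=1}^{n} J_j(q_j) \quad\text{s.t.}\quad q-d-CB\tilde\theta=0,\quad \underline F\le B\tilde\theta\le \overline F,\quad\text{where }\tilde\theta:=C^T\theta, \] \[ \text{(P2)}\quad \min_{q\in\mathbb{R}^{n}} \ \sum_{j=1}^{n} J_j(q_j) \quad\text{s.t.}\quad \mathbf 1^T(q-d)=0,\quad H^T(q-d)\le F . \] Then $(q^*,\tilde\theta^* )$ is an optimal solution to (P1) (i.e. $(q^*,\theta^* )$ is optimal for some $\theta^*$ with $C^T\theta^*=\tilde\theta^*$) if and only if $\tilde\theta^*=C^TL^{\dagger}(q^*-d)$ and $q^*$ is an optimal solution to (P2).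
   Context: A power network is a connected directed graph $(\mathcal N,\mathcal E)$ with $\mathcal N=\{1,\dots,n\}$ and edge set $\mathcal E\subset\mathcal N\times\mathcal N$ (if $(j,k)\in\mathcal E$ then $(k,j)\notin\mathcal E$). $C\in\mathbb{R}^{n\times|\mathcal E|}$ is the incidence matrix: $C_{j,e}=1$ if $e=(j,k)\in\mathcal E$, $C_{j,e}=-1$ if $e=(k,j)\in\mathcal E$, and $0$ otherwise. $B=\mathrm{diag}(B_{jk},(j,k)\in\mathcal E)$ is a diagonal matrix with positive diagonal entries. $L:=CBC^T$ and $L^\dagger$ is its Moore–Penrose inverse. $H\in\mathbb{R}^{n\times 2|\mathcal E|}$ is defined by $H^T=\begin{bmatrix} BC^TL^\dagger\\ -BC^TL^\dagger\end{bmatrix}$. Given line limits $\underline F,\overline F\in\mathbb{R}^{|\mathcal E|}$, $F:=\begin{bmatrix}\overline F\\ -\underline F\end{bmatrix}$. $d\in\mathbb{R}^n$ is a given demand vector, and each $J_j:\mathbb{R}\to\mathbb{R}$ is strictly convex and twice differentiable. $\mathbf 1$ is the all-ones vector. *)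

(* Defs.v *)
From HB Require Import structures.
From mathcomp Require Import all_boot all_order all_algebra.
From mathcomp Require Import all_classical all_reals all_analysis.
Set Implicit Arguments. Unset Strict Implicit. Unset Printing Implicit Defensive.
Import Order.TTheory GRing.Theory Num.Theory.
Local Open Scope ring_scope.

Section Defs.
Variable R : realType.

Definition simple_oriented (n m : nat) (edge : 'I_m -> 'I_n * 'I_n) : Prop :=
  injective edge /\ forall e f : 'I_m, edge f <> ((edge e).2, (edge e).1).

Definition adj (n m : nat) (edge : 'I_m -> 'I_n * 'I_n) : rel 'I_n :=
  fun a b => [exists e, edge e == (a, b)] || [exists e, edge e == (b, a)].

Definition graph_connected (n m : nat) (edge : 'I_m -> 'I_n * 'I_n) : Prop :=
  forall j k : 'I_n, connect (adj edge) j k.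

Definition incidence (n m : nat) (edge : 'I_m -> 'I_n * 'I_n) : 'M[R]_(n, m) :=
  \matrix_(j, e) (if (edge e).1 == j then 1 else if (edge e).2 == j then -1 else 0).

(* X is the Moore–Penrose inverse of A (Penrose conditions; it is unique) *)
Definition is_MP_inverse (n : nat) (A X : 'M[R]_n) : Prop :=
  [/\ A *m X *m A = A, X *m A *m X = X, (A *m X)^T = A *m X & (X *m A)^T = X *m A].

Definition cvle (k : nat) (u v : 'cV[R]_k) : Prop := forall i, u i 0 <= v i 0.

Definition strictly_convex (f : R -> R) : Prop :=
  forall x y t : R, x != y -> 0 < t -> t < 1 ->
    f (t * x + (1 - t) * y) < t * f x + (1 - t) * f y.

Definition twice_differentiable (f : R -> R) : Prop :=
  forall x : R, derivable f x 1 /\ derivable (derive1 f) x 1.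

Definition objective (n : nat) (J : 'I_n -> R -> R) (q : 'cV[R]_n) : R :=
  \sum_(j < n) J j (q j 0).

Definition P1_feasible (n m : nat) (C : 'M[R]_(n, m)) (B : 'M[R]_m)
  (d : 'cV[R]_n) (Flo Fup : 'cV[R]_m) (q theta : 'cV[R]_n) : Prop :=
  let thetat := C^T *m theta in
  q - d - C *m B *m thetat = 0 /\ cvle Flo (B *m thetat) /\ cvle (B *m thetat) Fup.

Definition P1_optimal (n m : nat) (J : 'I_n -> R -> R) (C : 'M[R]_(n, m)) (B : 'M[R]_m)
  (d : 'cV[R]_n) (Flo Fup : 'cV[R]_m) (q theta : 'cV[R]_n) : Prop :=
  P1_feasible C B d Flo Fup q theta /\
  forall q' theta', P1_feasible C B d Flo Fup q' theta' -> objective J q <= objective J q'.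

Definition P2_feasible (n m : nat) (HT : 'M[R]_(m + m, n)) (F : 'cV[R]_(m + m))
  (d : 'cV[R]_n) (q : 'cV[R]_n) : Prop :=
  (const_mx 1 : 'rV[R]_n) *m (q - d) = 0 /\ cvle (HT *m (q - d)) F.

Definition P2_optimal (n m : nat) (J : 'I_n -> R -> R) (HT : 'M[R]_(m + m, n))
  (F : 'cV[R]_(m + m)) (d : 'cV[R]_n) (q : 'cV[R]_n) : Prop :=
  P2_feasible HT F d q /\
  forall q', P2_feasible HT F d q' -> objective J q <= objective J q'.

End Defs.

(* Main.v *)
Require Import Defs.
From HB Require Import structures.
From mathcomp Require Import all_boot all_order all_algebra.
From mathcomp Require Import all_classical all_reals all_analysis.
From mathcomp Require Import ring lra.
Import Order.TTheory GRing.Theory Num.Theory.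
Local Open Scope ring_scope.

Lemma noloop n m (edge : 'I_m -> 'I_n * 'I_n) :
  simple_oriented edge -> forall e, (edge e).1 != (edge e).2.
Proof.
case=> _ H e; apply/eqP=> E; apply: (H e e).
by case: (edge e) E => a b /= ->.
Qed.

Lemma CTu (R : realType) n m (edge : 'I_m -> 'I_n * 'I_n) (u : 'cV[R]_n) e :
  (edge e).1 != (edge e).2 ->
  ((incidence R edge)^T *m u) e 0 = u (edge e).1 0 - u (edge e).2 0.
Proof.
move=> nab; rewrite mxE.
rewrite (bigD1 (edge e).1) //= (bigD1 (edge e).2) ?(eq_sym (edge e).2) //=.
rewrite !mxE eqxx (negbTE nab) eqxx.
rewrite big1 ?addr0 ?mul1r ?mulN1r //.
move=> j /andP[ja jb]; rewrite !mxE.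
by rewrite (eq_sym _ j) (negbTE ja) (eq_sym _ j) (negbTE jb) mul0r.
Qed.

Lemma kerLv (R : realType) n m (edge : 'I_m -> 'I_n * 'I_n) (b : 'I_m -> R)
  (Hb : forall e, 0 < b e) (u : 'cV[R]_n) :
  let C := incidence R edge in let B := diag_mx (\row_e b e) in
  C *m B *m C^T *m u = 0 -> C^T *m u = 0.
Proof.
move=> C B H.
have h : (C^T *m u)^T *m B *m (C^T *m u) = 0.
  have -> : (C^T *m u)^T *m B *m (C^T *m u) = u^T *m (C *m B *m C^T *m u).
    by rewrite trmx_mul trmxK !mulmxA.
  by rewrite H mulmx0.
set w := C^T *m u in h *.
have hs : \sum_e (b e * w e 0 ^+ 2) = 0.
  move/matrixP: h => /(_ 0 0); rewrite !mxE => h.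
  rewrite -[RHS]h; apply: eq_bigr => e _; rewrite mul_mx_diag !mxE; ring.
apply/matrixP => e k; rewrite (ord1 k) [RHS]mxE.
have pos : forall i, true -> 0 <= b i * w i 0 ^+ 2.
  move=> i _; apply: mulr_ge0; [exact: ltW | exact: sqr_ge0].
have := psumr_eq0P pos hs => /(_ e isT) /eqP.
by rewrite mulf_eq0 sqrf_eq0 (gt_eqF (Hb e)) /= => /eqP.
Qed.

Lemma kerL (R : realType) n m (edge : 'I_m -> 'I_n * 'I_n) (b : 'I_m -> R)
  (Hb : forall e, 0 < b e) p (U : 'M[R]_(n, p)) :
  let C := incidence R edge in let B := diag_mx (\row_e b e) in
  C *m B *m C^T *m U = 0 -> C^T *m U = 0.
Proof.
move=> C B H; apply/matrixP => e k.
have hc : C *m B *m C^T *m (col k U) = 0.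
  by rewrite colE mulmxA H mul0mx.
have := @kerLv R _ _ _ _ Hb _ hc; rewrite colE mulmxA -colE => /matrixP /(_ e 0).
by rewrite !mxE.
Qed.

Lemma const_ker (R : realType) n m (edge : 'I_m -> 'I_n * 'I_n)
  (Hedge : simple_oriented edge) (Hconn : graph_connected edge) (u : 'cV[R]_n) :
  (incidence R edge)^T *m u = 0 -> forall j k, u j 0 = u k 0.
Proof.
move=> H j k.
have cl : fingraph.closed (adj edge) [pred x | u x 0 == u k 0].
  move=> x y /orP[/existsP[e /eqP He]|/existsP[e /eqP He]];
  have := @CTu R _ _ _ u _ (noloop _ _ _ Hedge e); rewrite H mxE He /= => /eqP;
  rewrite eq_sym subr_eq0 => /eqP E; rewrite !inE E //.
have := closed_connect cl (Hconn j k); rewrite !inE eqxx.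
by move/eqP.
Qed.

Lemma LA (R : realType) n m (edge : 'I_m -> 'I_n * 'I_n) (b : 'I_m -> R)
  (Hb : forall e, 0 < b e) (Ld : 'M[R]_n) :
  let C := incidence R edge in let B := diag_mx (\row_e b e) in
  is_MP_inverse (C *m B *m C^T) Ld -> C^T *m Ld *m (C *m B *m C^T) = C^T.
Proof.
move=> C B [H1 H2 H3 H4].
have h : C *m B *m C^T *m (1%:M - Ld *m (C *m B *m C^T)) = 0.
  by rewrite mulmxBr mulmx1 (mulmxA (C *m B *m C^T) Ld) H1 subrr.
have := @kerL R _ _ _ _ Hb _ _ h.
by rewrite mulmxBr mulmx1 => /eqP; rewrite subr_eq0 => /eqP E; rewrite -mulmxA -E.
Qed.

Lemma Lsym (R : realType) n m (edge : 'I_m -> 'I_n * 'I_n) (b : 'I_m -> R) :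
  let C := incidence R edge in let B := diag_mx (\row_e b e) in
  (C *m B *m C^T)^T = C *m B *m C^T.
Proof. by move=> C B; rewrite !trmx_mul trmxK tr_diag_mx mulmxA. Qed.

Lemma LB (R : realType) n m (edge : 'I_m -> 'I_n * 'I_n) (b : 'I_m -> R)
  (Hedge : simple_oriented edge) (Hconn : graph_connected edge)
  (Hb : forall e, 0 < b e) (Ld : 'M[R]_n) (v : 'cV[R]_n) :
  let C := incidence R edge in let B := diag_mx (\row_e b e) in
  is_MP_inverse (C *m B *m C^T) Ld -> (const_mx 1 : 'rV[R]_n) *m v = 0 ->
  C *m B *m C^T *m Ld *m v = v.
Proof.
move=> C B [H1 H2 H3 H4] Hv.
set L := C *m B *m C^T in H1 H2 H3 H4 *.
have LT : L^T = L by exact: Lsym.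
set Q := 1%:M - L *m Ld.
have QT : Q^T = Q by rewrite /Q linearB /= trmx1 H3.
have QL : Q *m L = 0 by rewrite /Q mulmxBl mul1mx H1 subrr.
have LQ : L *m Q = 0 by rewrite -QT -LT -trmx_mul QL trmx0.
have CQ := @kerL R _ _ _ _ Hb _ _ LQ.
have colc : forall i j k, Q i k = Q j k.
  move=> i j k; have := @const_ker R _ _ _ Hedge Hconn (col k Q).
  rewrite colE mulmxA CQ mul0mx => /(_ erefl i j).
  by rewrite -colE !mxE.
have Qv : Q *m v = 0.
  apply/matrixP => i z; rewrite (ord1 z) [RHS]mxE mxE.
  transitivity (Q i i * ((const_mx 1 : 'rV[R]_n) *m v) 0 0); last by rewrite Hv !mxE mulr0.
  rewrite [X in _ = _ * X]mxE mulr_sumr; apply: eq_bigr => k _.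
  have -> : Q i k = Q i i.
    move/matrixP: QT => /(_ k i); rewrite mxE => ->; exact: colc.
  by rewrite !mxE mul1r.
by move/eqP: Qv; rewrite /Q mulmxBl mul1mx subr_eq0 -mulmxA => /eqP <-.
Qed.

Lemma oneC (R : realType) n m (edge : 'I_m -> 'I_n * 'I_n)
  (Hedge : simple_oriented edge) :
  (const_mx 1 : 'rV[R]_n) *m incidence R edge = 0.
Proof.
apply/matrixP => z e; rewrite (ord1 z) [RHS]mxE.
have := @CTu R _ _ _ (const_mx 1) e (noloop _ _ _ Hedge e).
rewrite !mxE subrr => E; rewrite -[RHS]E; apply: eq_bigr => j _; by rewrite !mxE mulrC.
Qed.

Lemma cvle_col (R : realType) k (a b c d : 'cV[R]_k) :
  cvle (col_mx a b) (col_mx c d) <-> cvle a c /\ cvle b d.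
Proof.
split.
  move=> H; split=> i; [have := H (lshift k i) | have := H (rshift k i)];
  by rewrite ?col_mxEu ?col_mxEd.
move=> [H1 H2] i; rewrite -(fintype.splitK i); case: (fintype.split i) => j /=;
by rewrite ?col_mxEu ?col_mxEd.
Qed.

Lemma cvleN (R : realType) k (a c : 'cV[R]_k) : cvle (- a) (- c) <-> cvle c a.
Proof.
split=> H i; have := H i; by rewrite !mxE lerN2.
Qed.

Lemma F1 (R : realType) (n m : nat) (edge : 'I_m -> 'I_n * 'I_n)
  (b : 'I_m -> R) (Ld : 'M[R]_n) (Flo Fup : 'cV[R]_m) (d : 'cV[R]_n)
  (Hedge : simple_oriented edge) (Hb : forall e, 0 < b e)
  (HLd : is_MP_inverse
           (incidence R edge *m diag_mx (\row_e b e) *m (incidence R edge)^T) Ld)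
  (q theta : 'cV[R]_n) :
  let C := incidence R edge in
  let B := diag_mx (\row_e b e) in
  let HT := col_mx (B *m C^T *m Ld) (- (B *m C^T *m Ld)) in
  let F := col_mx Fup (- Flo) in
  P1_feasible C B d Flo Fup q theta ->
  P2_feasible HT F d q /\ C^T *m Ld *m (q - d) = C^T *m theta.
Proof.
move=> C B HT F [E [Hlo Hup]].
have Eq : q - d = C *m B *m C^T *m theta.
  by apply/eqP; rewrite -subr_eq0 -mulmxA E.
have E2 : C^T *m Ld *m (q - d) = C^T *m theta.
  by rewrite Eq mulmxA (@LA R _ _ _ _ Hb _ HLd).
split=> //; split.
  by rewrite Eq !mulmxA (oneC _ _ _ _ Hedge) !mul0mx.
rewrite /HT /F mul_col_mx mulNmx -!mulmxA (mulmxA C^T) E2 cvle_col cvleN.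
by [].
Qed.

Lemma F2 (R : realType) (n m : nat) (edge : 'I_m -> 'I_n * 'I_n)
  (b : 'I_m -> R) (Ld : 'M[R]_n) (Flo Fup : 'cV[R]_m) (d : 'cV[R]_n)
  (Hedge : simple_oriented edge) (Hconn : graph_connected edge) (Hb : forall e, 0 < b e)
  (HLd : is_MP_inverse
           (incidence R edge *m diag_mx (\row_e b e) *m (incidence R edge)^T) Ld)
  (q : 'cV[R]_n) :
  let C := incidence R edge in
  let B := diag_mx (\row_e b e) in
  let HT := col_mx (B *m C^T *m Ld) (- (B *m C^T *m Ld)) in
  let F := col_mx Fup (- Flo) in
  P2_feasible HT F d q -> P1_feasible C B d Flo Fup q (Ld *m (q - d)).
Proof.
move=> C B HT F [H1 H2].
move: H2; rewrite /HT /F mul_col_mx mulNmx cvle_col cvleN => -[Hup Hlo].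
split.
  have := @LB R _ _ _ _ Hedge Hconn Hb _ _ HLd H1.
  by rewrite !mulmxA => ->; rewrite subrr.
by rewrite !mulmxA.
Qed.

Theorem lemma1 (R : realType) (n m : nat) (edge : 'I_m -> 'I_n * 'I_n)
  (b : 'I_m -> R) (Ld : 'M[R]_n) (Flo Fup : 'cV[R]_m) (d : 'cV[R]_n)
  (J : 'I_n -> R -> R)
  (Hedge : simple_oriented edge) (Hconn : graph_connected edge)
  (Hb : forall e, 0 < b e)
  (HLd : is_MP_inverse
           (incidence R edge *m diag_mx (\row_e b e) *m (incidence R edge)^T) Ld)
  (HJc : forall j, strictly_convex (J j))
  (HJd : forall j, twice_differentiable (J j))
  (q : 'cV[R]_n) (thetat : 'cV[R]_m) :
  let C := incidence R edge in
  let B := diag_mx (\row_e b e) in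
  let HT := col_mx (B *m C^T *m Ld) (- (B *m C^T *m Ld)) in
  let F := col_mx Fup (- Flo) in
  (exists theta : 'cV[R]_n, C^T *m theta = thetat /\ P1_optimal J C B d Flo Fup q theta)
  <-> (thetat = C^T *m Ld *m (q - d) /\ P2_optimal J HT F d q).
Proof.
move=> C B HT F; split.
  case=> theta [Et [Hf Hopt]].
  have [H2 E] := @F1 R _ _ _ _ _ Flo Fup d Hedge Hb HLd _ _ Hf.
  split; first by rewrite E Et.
  split=> // q' H'; apply: (Hopt q' (Ld *m (q' - d))).
  exact: (@F2 R _ _ _ _ _ Flo Fup d Hedge Hconn Hb HLd _ H').
case=> -> [H2 Hopt]; exists (Ld *m (q - d)); split; first by rewrite mulmxA.
split; first exact: (@F2 R _ _ _ _ _ Flo Fup d Hedge Hconn Hb HLd _ H2).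
move=> q' th' H'; apply: Hopt.
exact: (@F1 R _ _ _ _ _ Flo Fup d Hedge Hb HLd _ _ H').1.
Qed.
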